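(* Let $\mathcal{X}$ be a measurable space, $K\ge1$, and let classifiers be measurable maps $\mathcal{X}\to[K]$. Let $\mathcal{B}$ assign to each $x$ a set $\mathcal{B}(x)\subseteq\mathcal{X}$ and let $\mathcal{N}(V)=\{x:\exists x'\in V,\ \mathcal{B}(x)\cap\mathcal{B}(x')\neq\emptyset\}$. Let $Q$ be a probability measure on $\mathcal{X}$ satisfying the $c$-expansion property for a non-increasing $c:[0,1]\to(0,\infty)$, i.e. $Q(\mathcal{N}(S))\ge c(Q(S))Q(S)$ for every measurable $S$. Let $F,H,G_{pl}$ be classifiers, $\gamma_H=c(Q(\{x:G_{pl}(x)\neq H(x)\}))$, and assume $\gamma_H>1$. Let $\mathcal{S}_{\mathcal{B}}(F)=\{x:F(x)=F(x')\ \forall x'\in\mathcal{B}(x)\}$ (similarly for $H$), with complements $\mathcal{S}_{\mathcal{B}}^c(\cdot)$; let $\mathcal{M}(G_{pl})=\{x:G_{pl}(x)\neq H(x)\}$ and $\mathcal{M}_{pl}(F)=\{x:F(x)\neq G_{pl}(x)\}$. Let $q=Q(\mathcal{M}_{pl}(F)\cup\mathcal{S}_{\mathcal{B}}^c(F)\cup\mathcal{S}_{\mathcal{B}}^c(H))/(\gamma_H-1)$ and $\mathcal{N}_3=\{x\in\mathcal{S}_{\mathcal{B}}(F)\cap\mathcal{S}_{\mathcal{B}}(H):F(x)\neq G_{pl}(x),\ G_{pl}(x)=H(x)\}$. Then $$Q(\mathcal{N}_3)\le q+Q\big(\mathcal{S}_{\mathcal{B}}^c(F)\cup\mathcal{S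}_{\mathcal{B}}^c(H)\big)+Q(\mathcal{M}_{pl}(F))-Q(\mathcal{M}(G_{pl})).$$
   Context: All sets are assumed measurable. *)

(* Defs.v *)
From HB Require Import structures.
From mathcomp Require Import all_boot all_order all_algebra.
From mathcomp Require Import all_classical all_reals all_analysis.
Set Implicit Arguments. Unset Strict Implicit. Unset Printing Implicit Defensive.
Import Order.TTheory GRing.Theory Num.Theory.
Local Open Scope classical_set_scope.
Local Open Scope ring_scope.

(* A classifier X -> [K] (labels encoded as 'I_K) is measurable iff every
   label class is measurable (the codomain is discrete). *)
Definition measurable_classifier d (T : measurableType d) (K : nat)
  (f : T -> 'I_K) : Prop := forall k : 'I_K, measurable (f @^-1` [set k]).

Definition nbhdB (T : Type) (B : T -> set T) (V : set T) : set T :=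
  [set x | exists2 x', V x' & B x `&` B x' !=set0].

Definition robust_set (T : Type) (K : nat) (B : T -> set T) (F : T -> 'I_K)
  : set T := [set x | forall x', B x x' -> F x = F x'].

Definition pr d (T : measurableType d) (R : realType)
  (Q : probability T R) (A : set T) : R := fine (Q A).

Definition c_expansion d (T : measurableType d) (R : realType)
  (Q : probability T R) (B : T -> set T) (c : R -> R) : Prop :=
  forall S : set T, measurable S ->
    c (pr Q S) * pr Q S <= pr Q (nbhdB B S).

(* Main.v *)
Require Import Defs.
From HB Require Import structures.
From mathcomp Require Import all_boot all_order all_algebra.
From mathcomp Require Import all_classical all_reals all_analysis.
From mathcomp Require Import lra.
Import Order.TTheory GRing.Theory Num.Theory.
Local Open Scope classical_set_scope.
Local Open Scope ring_scope.

Section H.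
Context d (T : measurableType d) (R : realType) (Q : probability T R).

Lemma prE (A : set T) : measurable A -> Q A = (pr Q A)%:E.
Proof. by move=> mA; rewrite /pr fineK //; apply: fin_num_measure. Qed.

Lemma pr_ge0 (A : set T) : 0 <= pr Q A.
Proof. by rewrite /pr fine_ge0. Qed.

Lemma pr_le1 (A : set T) : measurable A -> pr Q A <= 1.
Proof. by move=> mA; rewrite -lee_fin -prE //; apply: probability_le1. Qed.

Lemma pr_le (A B : set T) : measurable A -> measurable B -> A `<=` B ->
  pr Q A <= pr Q B.
Proof.
move=> mA mB AB; rewrite -lee_fin -!prE //; apply: le_measure => //; rewrite inE //.
Qed.

Lemma pr_U2 (A B : set T) : measurable A -> measurable B ->
  pr Q (A `|` B) <= pr Q A + pr Q B.
Proof.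
move=> mA mB; rewrite -lee_fin EFinD -!prE //; [exact: measureU2|exact: measurableU].
Qed.

Lemma pr_U (A B : set T) : measurable A -> measurable B -> A `&` B = set0 ->
  pr Q (A `|` B) = pr Q A + pr Q B.
Proof.
move=> mA mB AB; apply/eqP; rewrite -eqe EFinD -!prE //; last exact: measurableU.
by apply/eqP; apply: measureU.
Qed.

End H.
Arguments pr_U2 {d T R} Q {A B}.
Arguments pr_U {d T R} Q {A B}.
Arguments pr_le {d T R} Q {A B}.

Lemma meas_neq d (T : measurableType d) (K : nat) (f g : T -> 'I_K) :
  measurable_classifier f -> measurable_classifier g ->
  measurable [set x | f x <> g x].
Proof.
move=> mf mg.
have -> : [set x | f x <> g x] =
  ~` \bigcup_(k in [set: 'I_K]) (f @^-1` [set k] `&` g @^-1` [set k]).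
  apply/seteqP; split => x /=.
    by move=> fg [k _ [/= fk gk]]; apply: fg; rewrite fk gk.
  by move=> H fg; apply: H; exists (f x) => //; split => //=.
apply: measurableC; apply: fin_bigcup_measurable => //.

by try (move=> k _; apply: measurableI).
Qed.

Theorem mainTheorem4 (d : measure_display) (T : measurableType d)
  (R : realType) (K : nat) (hK : (0 < K)%N)
  (B : T -> set T) (Q : probability T R) (c : R -> R)
  (c_pos : forall t, 0 <= t <= 1 -> 0 < c t)
  (c_noninc : forall s t, 0 <= s -> s <= t -> t <= 1 -> c t <= c s)
  (N_meas : forall S : set T, measurable S -> measurable (nbhdB B S))
  (hexp : c_expansion Q B c)
  (F H Gpl : T -> 'I_K)
  (mF : measurable_classifier F) (mH : measurable_classifier H)
  (mG : measurable_classifier Gpl)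
  (mSF : measurable (robust_set B F)) (mSH : measurable (robust_set B H)) :
  let gammaH := c (pr Q [set x | Gpl x <> H x]) in
  1 < gammaH ->
  let SF := robust_set B F in
  let SH := robust_set B H in
  let MG := [set x | Gpl x <> H x] in
  let MplF := [set x | F x <> Gpl x] in
  let q := pr Q (MplF `|` ~` SF `|` ~` SH) / (gammaH - 1) in
  let N3 := [set x | SF x /\ SH x /\ F x <> Gpl x /\ Gpl x = H x] in
  pr Q N3 <= q + pr Q (~` SF `|` ~` SH) + pr Q MplF - pr Q MG.
Proof.
move=> gam gam1; rewrite /is_true; cbv zeta.
set SF := robust_set B F; set SH := robust_set B H.
set MG := [set x | Gpl x <> H x]; set MplF := [set x | F x <> Gpl x].
set q := pr Q (MplF `|` ~` SF `|` ~` SH) / (gam - 1).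
set N3 := [set x | SF x /\ SH x /\ F x <> Gpl x /\ Gpl x = H x].
apply/idP.
have mMG : measurable MG by exact: meas_neq.
have mMplF : measurable MplF by exact: meas_neq.
have mV : measurable (~` SF `|` ~` SH) by apply: measurableU; apply: measurableC.
set U := MplF `|` ~` SF `|` ~` SH.
have mU : measurable U by rewrite /U -setUA; apply: measurableU.
set S := MG `&` ~` U.
have mS : measurable S by apply: measurableI => //; apply: measurableC.
have mN3 : measurable N3.
  have -> : N3 = SF `&` SH `&` MplF `&` ~` MG.
    apply/seteqP; split => x /=.
      by move=> [a [b [e f]]]; do !split => //; apply.
    by move=> [[[a b] e] f]; do !split => //; apply: contrapT.
  by do ! apply: measurableI => //; apply: measurableC.
have NS : nbhdB B S `<=` S `|` U.
  move=> x [x' [MGx' nUx'] [z [Bxz Bx'z]]].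
  case: (pselect (U x)) => Ux; [by right|left].
  have nU : forall y, ~ U y -> [/\ F y = Gpl y, SF y & SH y].
    move=> y nUy; split.
    - by apply: contrapT => h; apply: nUy; left; left.
    - by apply: contrapT => h; apply: nUy; left; right.
    - by apply: contrapT => h; apply: nUy; right.
  have [Fx SFx SHx] := nU x Ux.
  have [Fx' SFx' SHx'] := nU x' nUx'.
  split => //; rewrite /MG /= -Fx.
  rewrite (SFx z Bxz) (SHx z Bxz) -(SFx' z Bx'z) -(SHx' z Bx'z) Fx'.
  exact: MGx'.
have pS0 : 0 <= pr Q S by apply: pr_ge0.
have pSMG : pr Q S <= pr Q MG by apply: pr_le => // x [].
have cS : gam <= c (pr Q S).
  by apply: c_noninc => //; apply: pr_le1.
have h1 := hexp S mS.
have h2 : pr Q (nbhdB B S) <= pr Q S + pr Q U.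
  apply: (le_trans _ (pr_U2 Q mS mU)); apply: pr_le => //; try exact: N_meas; exact: measurableU.
have h3 : (gam - 1) * pr Q S <= pr Q U.
  have : (gam - 1) * pr Q S <= (c (pr Q S) - 1) * pr Q S.
    by apply: ler_wpM2r => //; lra.
  move=> hh; nra.
have hq : pr Q S <= q.
  by rewrite /q ler_pdivlMr ?subr_gt0 // mulrC.
have h4 : pr Q MG <= pr Q S + pr Q (MG `&` U).
  have mI : measurable (MG `&` U) by exact: measurableI.
  apply: (le_trans _ (pr_U2 Q mS mI)).
  apply: pr_le => //; first by apply: measurableU => //; exact: measurableI.
  move=> x MGx; case: (pselect (U x)) => Ux; [by right|by left].
have h5 : pr Q (MG `&` U) <= pr Q (MG `&` MplF) + pr Q (~` SF `|` ~` SH).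
  have mI : measurable (MG `&` MplF) by exact: measurableI.
  apply: (le_trans _ (pr_U2 Q mI mV)).
  apply: pr_le => //; first exact: measurableI.
    by apply: measurableU => //; exact: measurableI.
  move=> x [MGx [[Mx|Sx]|Sx]]; [by left|by right; left|by right; right].
have h6 : pr Q N3 + pr Q (MG `&` MplF) <= pr Q MplF.
  rewrite -pr_U //; last 2 first.
  - exact: measurableI.
  - by apply/seteqP; split => x // [[_ [_ [_ e]]] [g _]].
  apply: pr_le => //; first by apply: measurableU => //; exact: measurableI.
  by move=> x [[_ [_ []]]|[]].
lra.
Qed.
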